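(* Let $\mathrm{f}$ be a chief factor function, $G$ a finite group, $K\trianglelefteq G$, and $H/T$ a chief factor of $G$ with $K\le T$. Define normal subgroups $Z_1\le Z_2$ of $G$ containing $K$ by $Z_1/K=\mathrm{Z}(G/K,\mathrm{f})\cap T/K$ and $Z_2/K=\mathrm{Z}(G/K,\mathrm{f})\cap H/K$. Then $Z_2\ne Z_1$ if and only if $\mathrm{f}(H/T,G)=1$ and there exists $Z\trianglelefteq G$ with $Z_1\le Z$ such that $H/Z_1=T/Z_1\times Z/Z_1$. Moreover, in this case $Z_2=Z$.
   Context: A chief factor function is a function $\mathrm{f}$ assigning $0$ or $1$ to every pair $(H/K,G)$ with $G$ a finite group and $H/K$ a chief factor of $G$, such that: (1) $\mathrm{f}(H/K,G)=\mathrm{f}(M/N,G)$ whenever $H/K$ and $M/N$ are $G$-isomorphic chief factors of $G$; (2) $\mathrm{f}(H/K,G)=\mathrm{f}((H/N)/(K/N),G/N)$ for every $N\trianglelefteq G$ with $N\le K$. $\mathrm{Z}(G,\mathrm{f})$ denotes the greatest normal subgroup of $G$ such that $\mathrm{f}(H/K,G)=1$ for every chief factor $H/K$ of $G$ with $H\le \mathrm{Z}(G,\mathrm{f})$. *)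

(* Defs.v *)
From mathcomp Require Import all_boot all_fingroup all_solvable.
Set Implicit Arguments. Unset Strict Implicit. Unset Printing Implicit Defensive.
Import GroupScope.
Local Open Scope group_scope.

(* A raw chief factor function: [cff gT H K G] is the value f(H/K, G)
   (only meaningful when H/K is a chief factor of G). *)
Definition cff_raw := forall gT : finGroupType, {set gT} -> {set gT} -> {set gT} -> bool.

Definition Giso_chief (gT : finGroupType) (G H K M N : {group gT}) : Prop :=
  exists phi : {morphism H / K >-> coset_of N},
    isom (H / K) (M / N) phi /\
    forall g, g \in G -> forall x, x \in H / K ->
      phi (x ^ coset K g) = phi x ^ coset N g.

Unset Implicit Arguments.
Record chief_factor_function := ChiefFactorFunction {
  cff : cff_raw;
  cff_iso : forall (gT : finGroupType) (G H K M N : {group gT}),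
    chief_factor G K H -> chief_factor G N M -> Giso_chief G H K M N ->
    cff gT H K G = cff gT M N G;
  cff_quo : forall (gT : finGroupType) (G H K N : {group gT}),
    chief_factor G K H -> N <| G -> N \subset K ->
    cff gT H K G = cff (coset_of N) (H / N) (K / N) (G / N)
}.

Set Implicit Arguments.
Arguments cff f gT _ _ _ : rename.

Definition f_all_below (f : chief_factor_function) (gT : finGroupType)
    (G N : {set gT}) : bool :=
  [forall H : {group gT}, forall K : {group gT},
     (chief_factor G K H && (H \subset N)) ==> cff f gT H K G].

(* Z(G, f): the greatest such normal subgroup, realised as the subgroup
   generated by all of them. *)
Definition Zf (f : chief_factor_function) (gT : finGroupType) (G : {set gT})
    : {set gT} :=
  << \bigcup_(N : {group gT} | (N <| G) && f_all_below f G N) N >>.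

(* Main.v *)
Require Import Defs.
From mathcomp Require Import all_boot all_fingroup all_solvable.
Import GroupScope.
Local Open Scope group_scope.

Set Implicit Arguments. Unset Strict Implicit. Unset Printing Implicit Defensive.
Section Aux.
Variable gT : finGroupType.
Implicit Types G V U X A B C : {group gT}.

Lemma chiefP G V U : chief_factor G V U <->
  [/\ U <| G, V <| G, V \proper U &
      forall X, X <| G -> V \subset X -> X \subset U -> X :=: V \/ X :=: U].
Proof.
rewrite /chief_factor /maxnormal; split.
  case/andP => /maxgroupP [/andP [pVU nVG] maxV] nUG.
  have sVG : V \subset G by apply: subset_trans (proper_sub pVU) (normal_sub nUG).
  split => //; first by rewrite /normal sVG.
  move=> X nXG sVX sXU; have [->|neXU] := eqVneq X U; first by right.
  left; apply: maxV => //; rewrite (normal_norm nXG) andbT.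
  by rewrite properEneq neXU sXU.
case=> nUG nVG pVU maxV; rewrite nUG andbT; apply/maxgroupP.
split; first by rewrite pVU (normal_norm nVG).
move=> X /andP [pXU nXG] sVX.
have sXG : X \subset G by apply: subset_trans (proper_sub pXU) (normal_sub nUG).
have nXG' : X <| G by rewrite /normal sXG.
have [//|eXU] := maxV X nXG' sVX (proper_sub pXU).
by move: pXU; rewrite eXU properxx.
Qed.
End Aux.

Section Aux2.
Variable gT : finGroupType.
Implicit Types G V U X A B C : {group gT}.

Lemma chief_transfer G A B C : A <| G -> B <| G -> C <| G -> C * B = A ->
  (chief_factor G B A <-> chief_factor G (B :&: C)%G C).
Proof.
move=> nAG nBG nCG defA.
have sBA : B \subset A by rewrite -defA mulG_subr.
have sCA : C \subset A by rewrite -defA mulG_subl.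
have nIG : (B :&: C)%G <| G by apply: normalI.
split.
  case/chiefP => _ _ pBA maxB; apply/chiefP; split => //.
    rewrite properEneq subsetIr andbT; apply/eqP => eIC.
    have sCB : C \subset B by rewrite -eIC subsetIl.
    by move: pBA; rewrite -defA mulSGid // properxx.
  move=> X nXG sIX sXC.
  have nBX : X \subset 'N(B).
    exact: subset_trans (normal_sub nXG) (normal_norm nBG).
  have nYG : (X <*> B)%G <| G by apply: normalY.
  have sBY : B \subset X <*> B by apply: joing_subr.
  have sYA : X <*> B \subset A by rewrite join_subG sBA (subset_trans sXC sCA).
  case: (maxB _ nYG sBY sYA) => /= eY.
    left; apply/eqP; rewrite eqEsubset sIX andbT subsetI sXC andbT.
    by rewrite -eY joing_subl.
  right; apply/eqP; rewrite eqEsubset sXC /=.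
  have hm := group_modl B sXC.
  rewrite (mulGSid sIX) -(norm_joinEl nBX) eY -defA in hm.
  by rewrite hm subsetI mulG_subl subxx.
case/chiefP => _ _ pIC maxI; apply/chiefP; split => //.
  rewrite properEneq sBA andbT; apply/negP => eAB.
  have sCB : C \subset B by rewrite (eqP eAB).
  by move: pIC; rewrite /= (setIidPr sCB) properxx.
move=> X nXG sBX sXA.
have nYG : (X :&: C)%G <| G by apply: normalI.
have sIY : B :&: C \subset X :&: C by apply: setSI.
have sYC : X :&: C \subset C by apply: subsetIr.
case: (maxI _ nYG sIY sYC) => /= eY.
  left; apply/eqP; rewrite eqEsubset sBX andbT.
  have hm := group_modr C sBX.
  rewrite eY (mulSGid (subsetIl B C)) defA in hm.
  by rewrite hm subsetI subxx sXA.
right; apply/eqP; rewrite eqEsubset sXA /= -defA mul_subG //.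
by rewrite -eY subsetIl.
Qed.

Lemma giso_transfer G A B C : A <| G -> B <| G -> C <| G -> C * B = A ->
  Giso_chief G C (B :&: C)%G A B.
Proof.
move=> nAG nBG nCG defA.
have nBC : C \subset 'N(B) by apply: subset_trans (normal_sub nCG) (normal_norm nBG).
have nIG : (B :&: C)%G <| G by apply: normalI.
have [f injf imf] := second_isom nBC.
have fE : forall y, y \in C -> f (coset (B :&: C) y) = coset B y.
  move=> y Cy.
  have Ny : y \in 'N(B :&: C).
    by apply: (subsetP (normal_norm nIG)); apply: (subsetP (normal_sub nCG)).
  have := imf [set y]; rewrite sub1set Cy quotient_set1 // morphim_set1.
    rewrite quotient_set1; last exact: (subsetP nBC).
    by move=> /(_ isT) /set1_inj.
  by apply: mem_quotient.
exists f; split.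
  apply/isomP; split => //; rewrite imf //.
  by rewrite /= -defA quotientMidr.
move=> g Gg x /morphimP [c Nc Cc ->].
have NBCg : g \in 'N(B :&: C) by apply: (subsetP (normal_norm nIG)).
have NBg : g \in 'N(B) by apply: (subsetP (normal_norm nBG)).
have NBc : c \in 'N(B) by apply: (subsetP nBC).
have Ccg : c ^ g \in C by rewrite memJ_norm // (subsetP (normal_norm nCG)).
by rewrite -morphJ // fE // fE // morphJ.
Qed.
End Aux2.

Section Aux3.
Variable f : chief_factor_function.
Variable gT : finGroupType.
Implicit Types G V U X A B C L : {group gT}.

Lemma nnorm G X Y : X <| G -> Y <| G -> X \subset 'N(Y).
Proof. by move=> nX nY; apply: subset_trans (normal_sub nX) (normal_norm nY). Qed.

Lemma cff_transfer G A B C : A <| G -> B <| G -> C <| G -> C * B = A ->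
  chief_factor G (B :&: C) C -> cff f gT A B G = cff f gT C (B :&: C) G.
Proof.
move=> nAG nBG nCG defA ch2.
have ch1 := (chief_transfer nAG nBG nCG defA).2 ch2.
by rewrite (@cff_iso f gT G C (B :&: C)%G A B ch2 ch1 (giso_transfer nAG nBG nCG defA)).
Qed.

Definition Pb G (L U : {set gT}) := forall A B : {group gT},
  chief_factor G B A -> L \subset B -> A \subset U -> cff f gT A B G.

Lemma chief_normal G A B : chief_factor G B A -> A <| G /\ B <| G.
Proof. by case/chiefP. Qed.

Lemma chief_sub G A B : chief_factor G B A -> B \subset A.
Proof. by case/chiefP => _ _ /proper_sub. Qed.

Lemma step G A B (N : {group gT}) : chief_factor G B A -> N <| G -> A \subset N <*> B ->
  chief_factor G (B :&: (A :&: N)) (A :&: N) /\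
  cff f gT A B G = cff f gT (A :&: N) (B :&: (A :&: N)) G.
Proof.
move=> ch nNG sA; have [nAG nBG] := chief_normal ch.
have nCG : (A :&: N)%G <| G by apply: normalI.
have defA : (A :&: N) * B = A.
  rewrite group_modr; last exact: chief_sub ch.
 rewrite -(norm_joinEl (nnorm nNG nBG)).
  by apply/setIidPl.
have ch2 := (chief_transfer nAG nBG nCG defA).1 ch.
by split => //; apply: cff_transfer.
Qed.

Lemma J G L (N1 N2 : {group gT}) : N1 <| G -> N2 <| G -> L \subset N1 ->
  Pb G L N1 -> Pb G (N1 :&: N2) N2 -> Pb G L (N1 <*> N2).
Proof.
move=> nN1 nN2 sLN1 P1 P2 A B ch sLB sAU.
have [nAG nBG] := chief_normal ch.
have sBA := chief_sub ch.
have [sA|nsA] := boolP (A \subset N1 <*> B).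
  have [ch2 ->] := step ch nN1 sA.
  apply: P1 => //=; last by apply: subsetIr.
  by rewrite !subsetI sLB sLN1 (subset_trans sLB sBA).
set A' := (A <*> N1)%G; set B' := (B <*> N1)%G.
have nA'G : A' <| G by apply: normalY.
have nB'G : B' <| G by apply: normalY.
have eI : B' :&: A = B.
  have nIG : (B' :&: A)%G <| G by apply: normalI.
  have [/chiefP [_ _ _ maxB] ] := (ch, 0).
  case: (maxB _ nIG _ (subsetIr _ _)) => //=.
    by rewrite subsetI sBA joing_subl.
  move=> eA; case/negP: nsA; rewrite joingC.
  by have := subsetIl B' A; rewrite eA.
have defA' : A * B' = A'.
  by rewrite /= (norm_joinEl (nnorm nBG nN1)) (norm_joinEl (nnorm nAG nN1)) mulgA (mulGSid sBA).
have ch' : chief_factor G B' A'.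
  apply/(chief_transfer nA'G nB'G nAG defA').
  by have -> : (B' :&: A)%G = B by apply: val_inj.
have -> : cff f gT A B G = cff f gT A' B' G.
  by rewrite (cff_transfer nA'G nB'G nAG defA') ?eI.
have sA' : A' \subset N2 <*> B'.
  have sN1 : N1 \subset N2 <*> B'.
    exact: subset_trans (joing_subr B N1) (joing_subr N2 B').
  have sU : N1 <*> N2 \subset N2 <*> B' by rewrite join_subG sN1 joing_subl.
  by rewrite /= join_subG (subset_trans sAU sU) sN1.
have [ch2 ->] := step ch' nN2 sA'.
apply: P2 => //=; last by apply: subsetIr.
have s1 : N1 :&: N2 \subset N1 := subsetIl _ _.
by rewrite !subsetI subsetIr !andbT (subset_trans s1 (joing_subr B N1))
  (subset_trans s1 (joing_subr A N1)).
Qed.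
End Aux3.

Section Aux4.
Variable f : chief_factor_function.
Variable gT : finGroupType.
Implicit Types G V U X A B C L : {group gT}.

Lemma fabP G (N : {set gT}) : reflect (Pb f G 1 N) (f_all_below f G N).
Proof.
apply: (iffP forallP) => [h A B ch _ sAN | h H].
  by have := forallP (h A) B; rewrite ch sAN.
by apply/forallP => K; apply/implyP => /andP [ch s]; apply: h ch (sub1G _) s.
Qed.

Lemma ZfS G (N : {group gT}) : N <| G -> f_all_below f G N -> N \subset Zf f G.
Proof.
move=> nNG fN; rewrite /Zf; apply: sub_gen.
by apply: (bigcup_sup N); rewrite nNG fN.
Qed.

Lemma ZfP G : exists M : {group gT}, [/\ Zf f G = M, M <| G & Pb f G 1 M].
Proof.
have h1 : (1%G <| G) && f_all_below f G 1.
  rewrite normal1; apply/fabP => A B ch _ sA1.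
  have [_ _ pBA _] := (chiefP G B A).1 ch.
  by have := proper_sub_trans pBA sA1; rewrite properE sub1G andbF.
have [M /maxgroupP [/andP [nMG fM] maxM] _] :=
  maxgroup_exists (gP := fun N : {group gT} => (N <| G) && f_all_below f G N) h1.
exists M; split => //; last exact: (elimT (fabP G M) fM).
apply/eqP; rewrite eqEsubset ZfS // andbT /Zf gen_subG.
apply/bigcupsP => N /andP [nNG fN].
have nY : (M <*> N)%G <| G by apply: normalY.
have PY : Pb f G 1 (M <*> N).
  apply: (J nMG nNG (sub1G M) (elimT (fabP G M) fM)).
  move=> A B ch _ sAN; have := elimT (fabP G N) fN.
  by move=> P; apply: (P A B ch (sub1G B) sAN).
have := maxM (M <*> N)%G; rewrite nY /=.
have -> : f_all_below f G (M <*> N) by apply/fabP.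
by move=> /(_ isT (joing_subl _ _)) <-; apply: joing_subr.
Qed.
End Aux4.

Section Aux5.
Variable gT : finGroupType.
Implicit Types G V U X A B C L : {group gT}.

Lemma chief_quo G A B (N : {group gT}) : chief_factor G B A -> N <| G -> N \subset B ->
  chief_factor (G / N) (B / N) (A / N).
Proof.
move=> ch nNG sNB; have [nAG nBG pBA maxB] := (chiefP G B A).1 ch.
have sBA := proper_sub pBA.
have nNB : N <| B by apply: normalS sNB (subset_trans sBA (normal_sub nAG)) nNG.
have nNA : N <| A by apply: normalS (subset_trans sNB sBA) (normal_sub nAG) nNG.
apply/chiefP; split; rewrite ?quotient_normal ?quotient_proper //.
move=> X nXG sBX sXA.
have nYG : (coset N @*^-1 X)%G <| G by rewrite -(quotientGK nNG) /= cosetpre_normal.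
have sBY : B \subset coset N @*^-1 X by rewrite -(quotientGK nNB) cosetpreSK.
have sYA : coset N @*^-1 X \subset A by rewrite -(quotientGK nNA) cosetpreSK.
by case: (maxB _ nYG sBY sYA) => /= eY; [left|right]; rewrite -(cosetpreK X) eY.
Qed.

Lemma chief_squeeze G V U A B : chief_factor G V U -> chief_factor G B A ->
  V \subset B -> A \subset U -> A :=: U /\ B :=: V.
Proof.
move=> chU chA sVB sAU.
have [nUG nVG pVU maxV] := (chiefP G V U).1 chU.
have [nAG nBG pBA _] := (chiefP G B A).1 chA.
have sBA := proper_sub pBA.
have eA : A :=: U.
  case: (maxV A nAG (subset_trans sVB sBA) sAU) => // eA.
  by move: pBA; rewrite eA => /proper_sub_trans /(_ sVB); rewrite properxx.
split => //.
case: (maxV B nBG sVB (subset_trans sBA sAU)) => // eB.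
by move: pBA; rewrite eB eA properxx.
Qed.
End Aux5.

Unset Implicit Arguments. Set Strict Implicit.
Theorem lemma2 (f : chief_factor_function) (gT : finGroupType)
    (G K H T Z1 Z2 : {group gT}) :
  K <| G -> chief_factor G T H -> K \subset T ->
  Z1 <| G -> K \subset Z1 -> Z1 / K = Zf f (G / K) :&: (T / K) ->
  Z2 <| G -> K \subset Z2 -> Z2 / K = Zf f (G / K) :&: (H / K) ->
  ((Z2 :!=: Z1) =
     (cff f gT H T G &&
      [exists Z : {group gT},
         [&& Z <| G, Z1 \subset Z & (T / Z1) \x (Z / Z1) == H / Z1]]))
  /\ (forall Z : {group gT},
        cff f gT H T G -> Z <| G -> Z1 \subset Z -> (T / Z1) \x (Z / Z1) = H / Z1 ->
        Z2 :=: Z).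
Proof.
move=> nKG chHT sKT nZ1G sKZ1 eZ1 nZ2G sKZ2 eZ2.
have [M [eZ nMG PM]] := ZfP f (G / K)%G.
rewrite /= in eZ; rewrite eZ in eZ1 eZ2.
have [nHG nTG pTH maxT] := (chiefP G T H).1 chHT.
have sTH := proper_sub pTH.
have nKN : forall X : {group gT}, X <| G -> K \subset X -> K <| X.
  by move=> X nXG sKX; apply: normalS sKX (normal_sub nXG) nKG.
have NK : forall X : {group gT}, X <| G -> X \subset 'N(K).
  by move=> X nXG; apply: nnorm nXG nKG.
have Z2T : Z2 :&: T = Z1.
  have nIG : (Z2 :&: T)%G <| G by apply: normalI.
  apply: (quotient_inj (H := K)); rewrite ?nKN //= ?subsetI ?sKZ2 //.
  rewrite quotientIG // eZ2 -setIA (setIidPr (quotientS K sTH)) -eZ1 //.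
have sZ1T : Z1 \subset T by rewrite -Z2T subsetIr.
have sZ1Z2 : Z1 \subset Z2 by rewrite -Z2T subsetIl.
have sZ2H : Z2 \subset H.
  by rewrite -(quotientSGK (NK _ nZ2G) (subset_trans sKT sTH)) eZ2 subsetIr.
have part2 : forall Z : {group gT},
    cff f gT H T G -> Z <| G -> Z1 \subset Z -> (T / Z1) \x (Z / Z1) = H / Z1 ->
    Z2 :=: Z.
  move=> Z cHT nZG sZ1Z dp.
  have [_ defq _ trI] := dprodP dp.
  have nZ1N : forall X : {group gT}, X <| G -> X \subset 'N(Z1).
    by move=> X nXG; apply: nnorm nXG nZ1G.
  have sZ1H := subset_trans sZ1T sTH.
  have TZ : T :&: Z = Z1.
    apply/eqP; rewrite eqEsubset subsetI sZ1T sZ1Z andbT.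
    rewrite -quotient_sub1; last by apply: subset_trans (subsetIl _ _) (nZ1N _ nTG).
    by rewrite quotientGI // trI subxx.
  have defH : T * Z = H.
    rewrite -(norm_joinEl (nnorm nTG nZG)).
    apply: (quotient_inj (H := Z1)).
    - by apply: normalS (subset_trans sZ1T (joing_subl _ _)) _ nZ1G;
         rewrite join_subG (normal_sub nTG) (normal_sub nZG).
    - by apply: normalS sZ1H (normal_sub nHG) nZ1G.
    by rewrite /= (norm_joinEl (nnorm nTG nZG)) quotientMl ?(nZ1N _ nTG).
  have defH' : Z * T = H by rewrite -defH (normC (nnorm nZG nTG)).
  have chZ : chief_factor G Z1 Z.
    by rewrite -TZ; apply: (chief_transfer nHG nTG nZG defH').1.
  have cZ : cff f gT Z Z1 G.
    by rewrite -TZ -(cff_transfer f nHG nTG nZG defH') ?TZ.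
  have chZq := chief_quo chZ nKG sKZ1.
  have cZq : cff f _ (Z / K) (Z1 / K) (G / K).
    by rewrite -(@cff_quo f gT G Z Z1 K chZ nKG sKZ1).
  have nZqG : (Z / K)%G <| (G / K)%G by apply: quotient_normal.
  have PY : Pb f (G / K)%G 1 (M <*> (Z / K)%G).
    apply: (J nMG nZqG (sub1G M) PM) => A B ch sIB sAZ.
    have sV : Z1 / K \subset B.
      apply: subset_trans sIB; rewrite subsetI quotientS // andbT eZ1.
      exact: subsetIl.
    by have [-> ->] := chief_squeeze chZq ch sV sAZ.
  have sZM : Z / K \subset M.
    have := ZfS (normalY nMG nZqG) (introT (fabP f _ _) PY).
    by rewrite eZ join_subG => /andP [].
  have sZZ2 : Z \subset Z2.
    rewrite -(quotientSGK (NK _ nZG) sKZ2) eZ2 subsetI sZM quotientS //.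
    by rewrite -defH mulG_subr.
  have := group_modr T sZZ2; rewrite Z2T (mulSGid sZ1Z) defH (setIidPl sZ2H).
  by move=> ->.
split => //.
apply/idP/idP.
  move=> neq.
  have nJG : (T <*> Z2)%G <| G by apply: normalY.
  have defH : T * Z2 = H.
    rewrite -(norm_joinEl (nnorm nTG nZ2G)).
    case: (maxT _ nJG (joing_subl _ _)); rewrite ?join_subG ?sTH ?sZ2H //= => eJ.
    case/negP: neq; rewrite -Z2T; apply/eqP/esym/setIidPl.
    by rewrite -eJ joing_subr.
  have defH' : Z2 * T = H by rewrite -defH (normC (nnorm nZ2G nTG)).
  have TZ : T :&: Z2 = Z1 by rewrite setIC.
  have chZ : chief_factor G Z1 Z2.
    by rewrite -TZ; apply: (chief_transfer nHG nTG nZ2G defH').1.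
  have cHT : cff f gT H T G.
    rewrite (cff_transfer f nHG nTG nZ2G defH') ?TZ //.
    rewrite (@cff_quo f gT G Z2 Z1 K chZ nKG sKZ1).
    apply: PM; first exact: chief_quo chZ nKG sKZ1.
      exact: sub1G.
    by rewrite /= eZ2 subsetIl.
  rewrite cHT /=; apply/existsP; exists Z2; rewrite nZ2G sZ1Z2 /=.
  have nZ1T : T \subset 'N(Z1) := nnorm nTG nZ1G.
  have nZ1Z2 : Z2 \subset 'N(Z1) := nnorm nZ2G nZ1G.
  have trI : T / Z1 :&: Z2 / Z1 = 1.
    rewrite -quotientGI //.
    rewrite TZ; exact: trivg_quotient.
  have cent : Z2 / Z1 \subset 'C(T / Z1).
    apply/commG1P/trivgP; rewrite -trI subsetI.
    by rewrite commg_subr commg_subl !quotient_norms ?(nnorm nZ2G nTG) ?(nnorm nTG nZ2G).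
  by rewrite dprodE // -quotientMl // defH.
case/andP => cHT /existsP [Z /and3P [nZG sZ1Z /eqP dp]].
have eZ2Z := part2 Z cHT nZG sZ1Z dp.
apply/negP => /eqP eZZ1.
have nZ1T : Z1 <| T by apply: normalS sZ1T (normal_sub nTG) nZ1G.
have nZ1H : Z1 <| H by apply: normalS (subset_trans sZ1T sTH) (normal_sub nHG) nZ1G.
move: dp; rewrite -eZ2Z eZZ1 trivg_quotient dprodg1 => /(quotient_inj nZ1T nZ1H) eTH.
by move: pTH; rewrite eTH properxx.
Qed.
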